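(* Let $n\geq 3$, $y_1,\dots,y_n\in\mathbb{R}$, and let $r\in\{2,\dots,n\}$. Then $$-(n-2)y_1^2-(n-1)\sum_{\substack{1\leq i\leq n\\ i\neq 1,r}}y_i^2+(n-2)\sum_{i=2}^n y_1y_i+(n-1)\sum_{2\leq i<j\leq n}y_iy_j\leq \frac{(3n-1)(n-2)}{2(3n+5)}\Big(\sum_{i=1}^n y_i\Big)^2,$$ with equality if and only if $y_i=\frac32 y_1$ for all $i\in\{2,\dots,n\}\setminus\{r\}$ and $y_r=\frac92 y_1$. *)

(* Defs.v *)
From HB Require Import structures.
From mathcomp Require Import all_boot all_order all_algebra.
Set Implicit Arguments. Unset Strict Implicit. Unset Printing Implicit Defensive.

(* Main.v *)
Require Import Defs.
From HB Require Import structures.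
From mathcomp Require Import all_boot all_order all_algebra.
From mathcomp Require Import ring lra zify.
Import Order.TTheory GRing.Theory Num.Theory.
Local Open Scope ring_scope.

Lemma sq_sum (R : comRingType) (n : nat) (Pr : pred 'I_n) (f : 'I_n -> R) :
  (\sum_(i | Pr i) f i) ^+ 2 = \sum_(i | Pr i) f i ^+ 2
     + 2 * \sum_(i | Pr i) \sum_(j | Pr j && (i < j)%N) f i * f j.
Proof.
rewrite expr2 big_distrl /=.
have E : forall i, Pr i -> f i * \sum_(j | Pr j) f j =
   \sum_(j | Pr j && (i < j)%N) f i * f j + f i ^+ 2 + \sum_(j | Pr j && (j < i)%N) f i * f j.
  move=> i Pi; rewrite big_distrr /=. rewrite (bigID (fun j : 'I_n => (i < j)%N)) /=.
  rewrite -addrA; congr (_ + _).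
  rewrite (bigD1 i) /=; last by rewrite Pi ltnn.
  rewrite expr2; congr (_ + _); apply: eq_bigl => j.
  case: (Pr j) => //=; rewrite -leqNgt ltn_neqAle andbC; congr (_ && _).
rewrite (eq_bigr _ E) !big_split /=.
rewrite [X in _ + _ + X = _](exchange_big_dep Pr) /=; last by move=> i j _ /andP[].
have -> : \sum_(j | Pr j) \sum_(i | Pr i && (Pr j && (j < i)%N)) f i * f j
  = \sum_(j | Pr j) \sum_(i | Pr i && (j < i)%N) f j * f i.
  apply: eq_bigr => j Pj; apply: eq_big => [i|i _]; last by rewrite mulrC.
  by rewrite Pj.
ring.
Qed.

Lemma key (R : realFieldType) (N a T w P : R) (hN : 3 <= N) :
  let m := N - 2 in let k := N - 1 in
  let c := (3 * N - 1) * (N - 2) / (2 * (3 * N + 5)) in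
  let p := 2 * T / m - 3 * a in let q := 2 * w - 9 * a in
  let Mtw := c * m - k * m / 2 in
  c * (a + T + w) ^+ 2 -
  (- m * a ^+ 2 - k * P + m * (a * (T + w)) + k * (((T + w) ^+ 2 - (P + w ^+ 2)) / 2))
  = 3 / 2 * k * (P - T ^+ 2 / m) + 1 / (4 * c) * ((c * q + Mtw * p) ^+ 2 + k * m ^+ 2 / (3 * N + 5) * p ^+ 2).
Proof.
move=> m k c p q Mtw.
rewrite /Mtw /p /q /c /m /k.
field.
have h1 : 0 < N - 2 by lra.
have h2 : 0 < 3 * N + 5 by lra.
have h3 : 0 < 3 * N - 1 by lra.
by rewrite !gt_eqF.
Qed.

Theorem mainTheorem7 (R : realFieldType) (n : nat) (hn : (3 <= n)%N)
  (y : 'I_n -> R) (i0 : 'I_n) (hi0 : nat_of_ord i0 = 0%N)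
  (r : 'I_n) (hr : r != i0) :
  let LHS :=
    - (n - 2)%:R * y i0 ^+ 2
    - (n - 1)%:R * (\sum_(i < n | (i != i0) && (i != r)) y i ^+ 2)
    + (n - 2)%:R * (\sum_(i < n | i != i0) y i0 * y i)
    + (n - 1)%:R * (\sum_(i < n | i != i0) \sum_(j < n | (i0 != j) && (i < j)%N) y i * y j) in
  let RHS := ((3 * n - 1) * (n - 2))%:R / (2 * (3 * n + 5))%:R * (\sum_(i < n) y i) ^+ 2 in
  LHS <= RHS /\
  (LHS = RHS <->
     ((forall i : 'I_n, i != i0 -> i != r -> y i = 3%:R / 2%:R * y i0) /\
      y r = 9%:R / 2%:R * y i0)).
Proof.
move=> LHS RHS.
set a := y i0; set w := y r.
set T := \sum_(i < n | (i != i0) && (i != r)) y i.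
set P := \sum_(i < n | (i != i0) && (i != r)) y i ^+ 2.
set N : R := n%:R.
have hN : 3 <= N by rewrite /N (ler_nat R 3 n).
have h1 : \sum_(i < n | i != i0) y i = T + w.
  by rewrite (bigD1 r) //= addrC.
have h2 : \sum_(i < n | i != i0) a * y i = a * (T + w) by rewrite -mulr_sumr h1.
have h3 : \sum_(i < n) y i = a + T + w by rewrite (bigD1 i0) //= h1 addrA.
have hQ : \sum_(i < n | i != i0) y i ^+ 2 = P + w ^+ 2.
  by rewrite (bigD1 r) //= addrC.
have hM : \sum_(i < n | (i != i0) && (i != r)) (1 : R) = N - 2.
  have : \sum_(i < n) (1 : R) = N by rewrite sumr_const card_ord.
  rewrite (bigD1 i0) //= (bigD1 r) //=; lra.
have hD : \sum_(i < n | i != i0) \sum_(j < n | (i0 != j) && (i < j)%N) y i * y j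
   = ((T + w) ^+ 2 - (P + w ^+ 2)) / 2.
  have := @sq_sum R n (fun i : 'I_n => i != i0) y; rewrite h1 hQ.
  have -> : \sum_(i < n | i != i0) \sum_(j < n | (i0 != j) && (i < j)%N) y i * y j
    = \sum_(i < n | i != i0) \sum_(j < n | (j != i0) && (i < j)%N) y i * y j.
    by apply: eq_bigr => i _; apply: eq_bigl => j; rewrite eq_sym.
  by move=> ->; field.
have hdev : \sum_(i < n | (i != i0) && (i != r)) (y i - T / (N - 2)) ^+ 2
    = P - T ^+ 2 / (N - 2).
  under eq_bigr do rewrite sqrrB.
  rewrite big_split /= sumrB sumrMnl -mulr_suml -/P -/T.
  have -> : \sum_(i < n | (i != i0) && (i != r)) (T / (N - 2)) ^+ 2
      = (T / (N - 2)) ^+ 2 * (N - 2).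
    by rewrite -hM mulr_sumr; apply: eq_bigr => *; rewrite mulr1.
  have hz : N - 2 != 0 by apply: lt0r_neq0; lra.
  field; exact: hz.
have e1 : (n - 2)%:R = N - 2 :> R by rewrite natrB //; lia.
have e2 : (n - 1)%:R = N - 1 :> R by rewrite natrB //; lia.
have e3 : ((3 * n - 1) * (n - 2))%:R = (3 * N - 1) * (N - 2) :> R.
  by rewrite natrM e1 natrB ?natrM //; lia.
have e4 : (2 * (3 * n + 5))%:R = 2 * (3 * N + 5) :> R.
  by rewrite natrM natrD natrM.
have K := @key R N a T w P hN.
move: K => /= K.
have Hdef : RHS - LHS = (3 * N - 1) * (N - 2) / (2 * (3 * N + 5)) * (a + T + w) ^+ 2 -
  (- (N - 2) * a ^+ 2 - (N - 1) * P + (N - 2) * (a * (T + w)) + (N - 1) * (((T + w) ^+ 2 - (P + w ^+ 2)) / 2)).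
  by rewrite /RHS /LHS h2 hD h3 -/P e1 e2 e3 e4.
rewrite K in Hdef.
have hX : 0 <= P - T ^+ 2 / (N - 2).
  by rewrite -hdev; apply: sumr_ge0 => i _; apply: sqr_ge0.
have hc : 0 < (3 * N - 1) * (N - 2) / (2 * (3 * N + 5)).
  apply: divr_gt0; [apply: mulr_gt0|]; lra.
have hV : 0 < (N - 1) * (N - 2) ^+ 2 / (3 * N + 5).
  apply: divr_gt0; [apply: mulr_gt0; [|apply: exprn_gt0]|]; lra.
set X := P - T ^+ 2 / (N - 2) in Hdef hX.
set c := (3 * N - 1) * (N - 2) / (2 * (3 * N + 5)) in Hdef hc.
set V := (N - 1) * (N - 2) ^+ 2 / (3 * N + 5) in Hdef hV.
set p := 2 * T / (N - 2) - 3 * a in Hdef.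
set q := 2 * w - 9 * a in Hdef.
set U := c * q + (c * (N - 2) - (N - 1) * (N - 2) / 2) * p in Hdef.
have f1 : 0 <= 3 / 2 * (N - 1) * X by apply: mulr_ge0 => //; lra.
have f2 : 0 <= U ^+ 2 + V * p ^+ 2 by apply: addr_ge0; [apply: sqr_ge0| apply: mulr_ge0; [lra|apply: sqr_ge0]].
have f3 : 0 < 1 / (4 * c) by apply: divr_gt0; lra.
have f4 : 0 <= 1 / (4 * c) * (U ^+ 2 + V * p ^+ 2) by apply: mulr_ge0 => //; lra.
split; first by rewrite -subr_ge0 Hdef; lra.
split.
- move=> E.
  have E0 : RHS - LHS = 0 by rewrite E subrr.
  have t1 : 3 / 2 * (N - 1) * X = 0 by lra.
  have hX0 : X = 0.
    move: t1 => /eqP; rewrite mulf_eq0 => /orP[|/eqP //]; rewrite mulf_eq0 => /orP[] /eqP; lra.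
  have hW0 : 1 / (4 * c) * (U ^+ 2 + V * p ^+ 2) = 0 by lra.
  move: hW0 => /eqP; rewrite mulf_eq0 (gt_eqF f3) /= => /eqP hW0.
  have hU : U ^+ 2 = 0 by have := sqr_ge0 U; have := mulr_ge0 (ltW hV) (sqr_ge0 p); lra.
  have hp2 : V * p ^+ 2 = 0 by lra.
  move: hp2 => /eqP; rewrite mulf_eq0 (gt_eqF hV) /= sqrf_eq0 => /eqP hp.
  move: hU => /eqP; rewrite sqrf_eq0 /U hp mulr0 addr0 mulf_eq0 (gt_eqF hc) /= => /eqP hq.
  have hTm : T / (N - 2) = 3 / 2 * a.
    move: hp; rewrite /p -mulrA; lra.
  split; last by move: hq; rewrite /q; lra.
  move=> i hi hir.
  move: hX0; rewrite /X -hdev => /eqP; rewrite psumr_eq0; last by move=> j _; apply: sqr_ge0.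
  move=> /allP /(_ i (mem_index_enum _)); rewrite hi hir /= sqrf_eq0 subr_eq0 hTm.
  by move=> /eqP.
- move=> [Hz Hw].
  have hT : T = 3 / 2 * a * (N - 2).
    by rewrite /T -hM mulr_sumr; apply: eq_bigr => i /andP[hi hir]; rewrite Hz // mulr1.
  have hP : P = (3 / 2 * a) ^+ 2 * (N - 2).
    by rewrite /P -hM mulr_sumr; apply: eq_bigr => i /andP[hi hir]; rewrite Hz // mulr1.
  have hz : N - 2 != 0 by apply: lt0r_neq0; lra.
  have hX0 : X = 0 by rewrite /X hT hP; field.
  have hp : p = 0 by rewrite /p hT; field.
  have hq : q = 0 by rewrite /q Hw; lra.
  have : RHS - LHS = 0 by rewrite Hdef hX0 /U hp hq; ring.
  lra.
Qed.
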